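(* Let $\lambda\in\mathbb Q\cup\{\infty\}$, $i\in\{2,3,6\}$ and $\ell\in\mathbb Z_{>0}$ not divisible by $i$. Write $\lambda=b/a$ with $a\in\mathbb N$, $b\in\mathbb Z$, $\gcd(a,b)=\ell$ (for $\lambda=\infty$ take $a=0$, $b=\ell$), and write $a=ia'+a''$, $b=ib'+b''$ with $a',a'',b',b''\in\mathbb Z$, $0\le a'',b''\le i-1$. Then $$R^\lambda_\ell(i)=\{a'h_0+b'h_\infty+r\mid r\in R_{[a'',b'']}(i)\}.$$
   Context: Let $V=\{1_1,1_2,2_1,2_2,3_0,3_1,4_0,4_1,5_{-1},5_0\}$ and identify $\mathbb Z^{10}=\mathbb Z^V$. Let $A$ be the set of 12 arrows $2_2\to1_2$, $1_2\to2_1$, $3_1\to2_1$, $2_2\to3_1$, $4_1\to3_1$, $3_1\to4_0$, $5_0\to4_0$, $4_1\to5_0$, $2_1\to1_1$, $2_1\to3_0$, $4_0\to3_0$, $4_0\to5_{-1}$, and let $P=\{(2_2,2_1),(4_1,4_0),(1_2,1_1),(3_1,3_0),(5_0,5_{-1})\}$. The Ringel form is $\langle d,e\rangle=\sum_{v\in V}d_ve_v-\sum_{(v\to w)\in A}d_ve_w+\sum_{(v,w)\in P}d_ve_w$. Write $\langle d,e\rangle=d^{t}Ee$ and $\Phi=-E^{-1}E^{t}$ (integral, $\Phi^6=\mathrm{id}$). Let $q(d)=\langle d,d\rangle$, $R=\{d\neq0: q(d)\in\{0,1\}\}$. Let $h_0$ have entries $(1,1,3,0,2,2,3,0,1,1)$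 and $h_\infty$ entries $(0,1,1,1,0,2,1,1,0,1)$ at the vertices $(1_1,1_2,2_1,2_2,3_0,3_1,4_0,4_1,5_{-1},5_0)$. $R^+=\{d\in R: \langle d,h_\infty\rangle>0\text{ or }(\langle d,h_\infty\rangle=0\text{ and }\langle h_0,d\rangle>0)\}$; the slope of $d\in R^+$ is $\langle h_0,d\rangle/\langle d,h_\infty\rangle\in\mathbb Q\cup\{\infty\}$, $R^\lambda$ the positive roots of slope $\lambda$. $\operatorname{rk}(d)$ is the least $m\ge1$ with $\Phi^m(d)=d$, $h(d)=\sum_{j=1}^{\operatorname{rk}(d)}\Phi^j(d)$, $\operatorname{ql}(d)$ the gcd of the entries of $h(d)$, and $R^\lambda_\ell(i)=\{d\in R^\lambda:\operatorname{rk}(d)=i,\operatorname{ql}(d)=\ell\}$. For $0\le m,n\le i-1$, $(m,n)\ne(0,0)$, set $R_{[m,n]}(i)=R^{n/m}_{\gcd(m,n)}(i)$ (with $n/0=\infty$). *)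

(* Defs.v *)
From HB Require Import structures.
From mathcomp Require Import all_boot all_order all_algebra.
Set Implicit Arguments. Unset Strict Implicit. Unset Printing Implicit Defensive.
Import Order.TTheory GRing.Theory Num.Theory.
Local Open Scope ring_scope.

(* Vertices are numbered 0..9 in the order
   1_1, 1_2, 2_1, 2_2, 3_0, 3_1, 4_0, 4_1, 5_{-1}, 5_0.
   Dimension vectors d in Z^V are integer column vectors of height 10. *)
Definition vec := 'cV[int]_10.

Definition at_v (d : vec) (v : nat) : int := d (inord v) 0.

Definition arrows : seq (nat * nat) :=
  [:: (3,1); (1,2); (5,2); (3,5); (7,5); (5,6); (9,6); (7,9);
      (2,0); (2,4); (6,4); (6,8)]%N.

Definition Ppairs : seq (nat * nat) :=
  [:: (3,2); (7,6); (1,0); (5,4); (9,8)]%N.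

Definition ringel (d e : vec) : int :=
  \sum_(v < 10) d v 0 * e v 0
  - \sum_(p <- arrows) at_v d p.1 * at_v e p.2
  + \sum_(p <- Ppairs) at_v d p.1 * at_v e p.2.

Definition Emx : 'M[int]_10 :=
  \matrix_(i < 10, j < 10) ringel (delta_mx i 0) (delta_mx j 0).

Definition Phi : 'M[int]_10 := - (invmx Emx *m Emx^T).

Definition qform (d : vec) : int := ringel d d.

Definition vec_of (s : seq int) : vec := \col_(i < 10) nth 0 s i.

Definition h0 : vec := vec_of [:: 1; 1; 3; 0; 2; 2; 3; 0; 1; 1].
Definition hinf : vec := vec_of [:: 0; 1; 1; 1; 0; 2; 1; 1; 0; 1].

Definition isRoot (d : vec) : bool :=
  (d != 0) && ((qform d == 0) || (qform d == 1)).

Definition isPos (d : vec) : bool :=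
  (0 < ringel d hinf) || ((ringel d hinf == 0) && (0 < ringel h0 d)).

(* slope in Q u {oo}; None stands for oo *)
Definition slope (d : vec) : option rat :=
  if ringel d hinf == 0 then None
  else Some ((ringel h0 d)%:~R / (ringel d hinf)%:~R).

Definition Rlam (lam : option rat) (d : vec) : bool :=
  [&& isRoot d, isPos d & slope d == lam].

Definition hasRank (d : vec) (i : nat) : bool :=
  [&& (0 < i)%N, (Phi ^+ i *m d == d) &
      [forall m : 'I_i, (0 < m)%N ==> (Phi ^+ m *m d != d)]].

Definition hvec (d : vec) (i : nat) : vec :=
  \sum_(1 <= j < i.+1) (Phi ^+ j *m d).

Definition ql (d : vec) (i : nat) : nat :=
  \big[gcdn/0%N]_(j < 10) `|hvec d i j ord0|%N.

Definition Rli (lam : option rat) (l i : nat) (d : vec) : bool :=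
  [&& Rlam lam d, hasRank d i & ql d i == l].

Definition Rmn (m n i : nat) (d : vec) : bool :=
  Rli (if m == 0%N then None else Some (n%:Q / m%:Q)) (gcdn m n) i d.

(* Main.v *)
Require Import Defs.
From HB Require Import structures.
From mathcomp Require Import all_boot all_order all_algebra.
From mathcomp Require Import zify ring lra.
Import Order.TTheory GRing.Theory Num.Theory.
Local Open Scope ring_scope.

Lemma sum10n (F : nat -> int) : \sum_(v < 10) F v =
  F 0%N + F 1%N + F 2%N + F 3%N + F 4%N + F 5%N + F 6%N + F 7%N + F 8%N + F 9%N.
Proof.
rewrite -(big_mkord xpredT F) /index_iota /= !big_cons big_nil /=.
by rewrite !addrA addr0.
Qed.

Definition mxl (L : seq (seq int)) : 'M[int]_10 := \matrix_(i < 10, j < 10) nth 0 (nth [::] L i) j.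

Lemma at_mxl L x r : (r < 10)%N ->
  at_v (mxl L *m x) r = nth 0 (nth [::] L r) 0 * at_v x 0 + nth 0 (nth [::] L r) 1 * at_v x 1 + nth 0 (nth [::] L r) 2 * at_v x 2 + nth 0 (nth [::] L r) 3 * at_v x 3 + nth 0 (nth [::] L r) 4 * at_v x 4 + nth 0 (nth [::] L r) 5 * at_v x 5 + nth 0 (nth [::] L r) 6 * at_v x 6 + nth 0 (nth [::] L r) 7 * at_v x 7 + nth 0 (nth [::] L r) 8 * at_v x 8 + nth 0 (nth [::] L r) 9 * at_v x 9.
Proof.
move=> hr; rewrite /at_v !mxE.
rewrite (eq_bigr (fun k : 'I_10 => nth 0 (nth [::] L r) k * x (inord k) 0)); last first.
  by move=> k _; rewrite !mxE inordK // inord_val.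
by rewrite (sum10n (fun k => nth 0 (nth [::] L r) k * x (inord k) 0)).
Qed.

Lemma ringelE d e : ringel d e = at_v d 0 * at_v e 0 + at_v d 1 * at_v e 1 + at_v d 2 * at_v e 2 + at_v d 3 * at_v e 3 + at_v d 4 * at_v e 4 + at_v d 5 * at_v e 5 + at_v d 6 * at_v e 6 + at_v d 7 * at_v e 7 + at_v d 8 * at_v e 8 + at_v d 9 * at_v e 9 - at_v d 3 * at_v e 1 - at_v d 1 * at_v e 2 - at_v d 5 * at_v e 2 - at_v d 3 * at_v e 5 - at_v d 7 * at_v e 5 - at_v d 5 * at_v e 6 - at_v d 9 * at_v e 6 - at_v d 7 * at_v e 9 - at_v d 2 * at_v e 0 - at_v d 2 * at_v e 4 - at_v d 6 * at_v e 4 - at_v d 6 * at_v e 8 + at_v d 3 * at_v e 2 + at_v d 7 * at_v e 6 + at_v d 1 * at_v e 0 + at_v d 5 * at_v e 4 + at_v d 9 * at_v e 8.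
Proof.
rewrite /ringel /arrows /Ppairs !big_cons !big_nil /=.
rewrite (eq_bigr (fun k : 'I_10 => at_v d k * at_v e k)); last by move=> k _; rewrite /at_v inord_val.
rewrite (sum10n (fun k => at_v d k * at_v e k)). ring.
Qed.

Definition EL : seq (seq int) := [:: [:: 1; 0; 0; 0; 0; 0; 0; 0; 0; 0]; [:: 1; 1; -1; 0; 0; 0; 0; 0; 0; 0]; [:: -1; 0; 1; 0; -1; 0; 0; 0; 0; 0]; [:: 0; -1; 1; 1; 0; -1; 0; 0; 0; 0]; [:: 0; 0; 0; 0; 1; 0; 0; 0; 0; 0]; [:: 0; 0; -1; 0; 1; 1; -1; 0; 0; 0]; [:: 0; 0; 0; 0; -1; 0; 1; 0; -1; 0]; [:: 0; 0; 0; 0; 0; -1; 1; 1; 0; -1]; [:: 0; 0; 0; 0; 0; 0; 0; 0; 1; 0]; [:: 0; 0; 0; 0; 0; 0; -1; 0; 1; 1]].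
Definition FL : seq (seq int) := [:: [:: 1; 0; 0; 0; 0; 0; 0; 0; 0; 0]; [:: 0; 1; 1; 0; 1; 0; 0; 0; 0; 0]; [:: 1; 0; 1; 0; 1; 0; 0; 0; 0; 0]; [:: 0; 1; 1; 1; 1; 1; 1; 0; 1; 0]; [:: 0; 0; 0; 0; 1; 0; 0; 0; 0; 0]; [:: 1; 0; 1; 0; 1; 1; 1; 0; 1; 0]; [:: 0; 0; 0; 0; 1; 0; 1; 0; 1; 0]; [:: 1; 0; 1; 0; 1; 1; 1; 1; 0; 1]; [:: 0; 0; 0; 0; 0; 0; 0; 0; 1; 0]; [:: 0; 0; 0; 0; 1; 0; 1; 0; 0; 1]].
Definition PL : seq (seq int) :=
 [:: [:: -1; -1; 1; 0; 0; 0; 0; 0; 0; 0]; [:: 0; 0; 0; 0; -1; 0; 1; 0; 0; 0]; [:: -1; 0; 1; -1; -1; 0; 1; 0; 0; 0]; [:: 0; 0; 0; 0; -1; 0; 1; 0; -1; 0]; [:: 0; 0; 1; 0; -1; -1; 1; 0; 0; 0]; [:: -1; 0; 1; 0; -1; 0; 1; 0; -1; 0]; [:: 0; 0; 1; 0; -1; 0; 1; -1; -1; 0]; [:: -1; 0; 1; 0; -1; 0; 0; 0; 0; 0]; [:: 0; 0; 0; 0; 0; 0; 1; 0; -1; -1]; [:: 0; 0; 1; 0; -1; 0; 0; 0; 0; 0]].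
Definition Pm := mxl PL.

Lemma test x y : ringel x (Pm *m y) = - ringel y x.
Proof.
rewrite !ringelE.
rewrite !at_mxl //= .
ring.
Qed.

Lemma nat10 (P : nat -> Prop) : P 0%N -> P 1%N -> P 2%N -> P 3%N -> P 4%N -> P 5%N -> P 6%N -> P 7%N -> P 8%N -> P 9%N ->
  forall r, (r < 10)%N -> P r.
Proof. by move=> p0 p1 p2 p3 p4 p5 p6 p7 p8 p9 [|[|[|[|[|[|[|[|[|[|r]]]]]]]]]]. Qed.

Lemma mx_ext10 (A B : 'M[int]_10) :
  (forall r c, (r < 10)%N -> (c < 10)%N -> A (inord r) (inord c) = B (inord r) (inord c)) -> A = B.
Proof.
move=> H; apply/matrixP => i j; have := H i j (ltn_ord i) (ltn_ord j).
by rewrite !inord_val.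
Qed.

Lemma at_delta r k : (r < 10)%N -> (k < 10)%N ->
  at_v (delta_mx (inord r) 0) k = (k == r)%:R.
Proof.
move=> hr hk; rewrite /at_v mxE eqxx andbT.
by rewrite -(inj_eq val_inj) /= !inordK.
Qed.

Lemma Emx_eq : Emx = mxl EL.
Proof.
apply: mx_ext10 => r c hr hc; rewrite !mxE !inordK // ringelE !at_delta //.
move: c hc; move: r hr; apply: nat10; apply: nat10; by [].
Qed.

Lemma mxl_entry L r c : (r < 10)%N -> (c < 10)%N -> mxl L (inord r) (inord c) = nth 0 (nth [::] L r) c.
Proof. by move=> hr hc; rewrite mxE !inordK. Qed.

Lemma mul_mxl A B r c : (r < 10)%N -> (c < 10)%N ->
  (mxl A *m mxl B) (inord r) (inord c) = nth 0 (nth [::] A r) 0 * nth 0 (nth [::] B 0) c + nth 0 (nth [::] A r) 1 * nth 0 (nth [::] B 1) c + nth 0 (nth [::] A r) 2 * nth 0 (nth [::] B 2) c + nth 0 (nth [::] A r) 3 * nth 0 (nth [::] B 3) c + nth 0 (nth [::] A r) 4 * nth 0 (nth [::] B 4) c + nth 0 (nth [::] A r) 5 * nth 0 (nth [::] B 5) c + nth 0 (nth [::] A r) 6 * nth 0 (nth [::] B 6) c + nth 0 (nth [::] A r) 7 * nth 0 (nth [::] B 7) c + nth 0 (nth [::] A r) 8 * nth 0 (nth [::] B 8) c + nth 0 (nth [::] A r) 9 * nth 0 (nth [::] B 9) c.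
Proof.
move=> hr hc; rewrite !mxE.
rewrite (eq_bigr (fun k : 'I_10 => nth 0 (nth [::] A r) k * nth 0 (nth [::] B k) c)); last first.
  by move=> k _; rewrite !mxE !inordK.
by rewrite (sum10n (fun k => nth 0 (nth [::] A r) k * nth 0 (nth [::] B k) c)).
Qed.

Lemma inord_eq10 r c : (r < 10)%N -> (c < 10)%N -> (inord r == inord c :> 'I_10) = (r == c).
Proof. by move=> hr hc; rewrite -(inj_eq val_inj) /= !inordK. Qed.

Lemma FE : mxl FL *m mxl EL = 1%:M.
Proof.
apply: mx_ext10 => r c hr hc; rewrite mul_mxl // mxE inord_eq10 //.
move: c hc; move: r hr; apply: nat10; apply: nat10; by [].
Qed.

Lemma EP : mxl EL *m Pm = - (mxl EL)^T.
Proof.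
apply: mx_ext10 => r c hr hc; rewrite mul_mxl // !mxE !inordK //.
move: c hc; move: r hr; apply: nat10; apply: nat10; by [].
Qed.

Lemma Phi_eq : Phi = Pm.
Proof.
have [_ uE] := mulmx1_unit FE.
rewrite /Phi Emx_eq.
have -> : (mxl EL)^T = - (mxl EL *m Pm) by rewrite EP opprK.
by rewrite mulmxN opprK mulKmx.
Qed.

Lemma at_vec_of s k : (k < 10)%N -> at_v (vec_of s) k = nth 0 s k.
Proof. by move=> hk; rewrite /at_v mxE inordK. Qed.

Lemma atD x y k : at_v (x + y) k = at_v x k + at_v y k.
Proof. by rewrite /at_v mxE. Qed.
Lemma atN x k : at_v (- x) k = - at_v x k.
Proof. by rewrite /at_v mxE. Qed.
Lemma atZ c x k : at_v (c *: x) k = c * at_v x k.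
Proof. by rewrite /at_v mxE. Qed.
Lemma at0 k : at_v (0 : vec) k = 0.
Proof. by rewrite /at_v mxE. Qed.

Lemma vec_ext (x y : vec) : (forall k, (k < 10)%N -> at_v x k = at_v y k) -> x = y.
Proof.
move=> H; apply/matrixP => i j; rewrite (ord1 j); have := H i (ltn_ord i).
by rewrite /at_v inord_val.
Qed.



Ltac expand := rewrite ?ringelE ?atD ?atN ?atD ?atZ ?at0 ?at_mxl // ?at_vec_of //=.

Lemma Ph0 : Pm *m h0 = h0.
Proof. apply: vec_ext; apply: nat10; rewrite /h0 /hinf; expand. Qed.
Lemma Phinf : Pm *m hinf = hinf.
Proof. apply: vec_ext; apply: nat10; rewrite /h0 /hinf; expand. Qed.

Lemma PinvL x : ringel (Pm *m x) hinf = ringel x hinf.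
Proof. rewrite /hinf; expand; ring. Qed.
Lemma PinvR x : ringel h0 (Pm *m x) = ringel h0 x.
Proof. rewrite /h0; expand; ring. Qed.

Lemma ringelDl e x y : ringel (x + y) e = ringel x e + ringel y e.
Proof. expand; ring. Qed.
Lemma ringelDr e x y : ringel e (x + y) = ringel e x + ringel e y.
Proof. expand; ring. Qed.
Lemma ringel0l e : ringel 0 e = 0.
Proof. expand; ring. Qed.
Lemma ringel0r e : ringel e 0 = 0.
Proof. expand; ring. Qed.

Lemma qform_shift x s t : qform (x + (s *: h0 + t *: hinf)) = qform x.
Proof. rewrite /qform /h0 /hinf; expand; ring. Qed.

Lemma ringel_span s t :
  ringel (s *: h0 + t *: hinf) hinf = 6 * s /\ ringel h0 (s *: h0 + t *: hinf) = 6 * t.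
Proof. rewrite /h0 /hinf; split; expand; ring. Qed.

Lemma fixed_span x : Pm *m x = x -> x = at_v x 0 *: h0 + at_v x 3 *: hinf.
Proof.
move=> H.
have E : forall k, (k < 10)%N -> at_v (Pm *m x) k = at_v x k by move=> k _; rewrite H.
have := E 0%N erefl; have := E 1%N erefl; have := E 2%N erefl; have := E 3%N erefl;
have := E 4%N erefl; have := E 5%N erefl; have := E 6%N erefl; have := E 7%N erefl;
have := E 8%N erefl; have := E 9%N erefl.
expand => e9 e8 e7 e6 e5 e4 e3 e2 e1 e0.
apply: vec_ext; apply: nat10; rewrite /h0 /hinf; expand; lia.
Qed.




Lemma dvd_comb g (al be u v : int) : (g %| (absz al))%N -> (g %| (absz be))%N -> (g %| (absz (al * u + be * v)%R))%N.
Proof.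
move=> ha hb; have : (g%:Z %| al * u + be * v)%Z.
  by rewrite rpredD // dvdz_mulr.
by [].
Qed.

Lemma ql_span d i (al be : int) : hvec d i = al *: h0 + be *: hinf -> ql d i = gcdn (absz al) (absz be).
Proof.
rewrite /ql => ->.
rewrite (eq_bigr (fun j : 'I_10 => absz (at_v (al *: h0 + be *: hinf)%R j))); last first.
  by move=> j _; rewrite /at_v inord_val.
rewrite -(big_mkord xpredT (fun k => absz (at_v (al *: h0 + be *: hinf)%R k))) /index_iota /= !big_cons big_nil.
rewrite /h0 /hinf; expand.
apply/eqP; rewrite eqn_dvd; apply/andP; split.
  rewrite dvdn_gcd; apply/andP; split.
    by apply: (dvdn_trans (dvdn_gcdl _ _)); rewrite mulr1 mulr0 addr0.
  do 3 apply: (dvdn_trans (dvdn_gcdr _ _)).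
  by apply: (dvdn_trans (dvdn_gcdl _ _)); rewrite mulr1 mulr0 add0r.
by rewrite !dvdn_gcd ?dvdn0 ?dvd_comb ?dvdn_gcdl ?dvdn_gcdr.
Qed.

Definition sh (s t : int) : vec := s *: h0 + t *: hinf.

Lemma Psh s t : Pm *m sh s t = sh s t.
Proof. by rewrite /sh mulmxDr -!(scalemxAr _ Pm) Ph0 Phinf. Qed.

Lemma powfix (h : vec) m : Pm *m h = h -> Pm ^+ m *m h = h.
Proof.
move=> H; elim: m => [|m IH]; first by rewrite expr0 mul1mx.
by rewrite exprS -mulmxE -mulmxA IH.
Qed.

Lemma pow_shift v s t m : Phi ^+ m *m (v + sh s t) = Phi ^+ m *m v + sh s t.
Proof. by rewrite Phi_eq mulmxDr (powfix _ m (Psh s t)). Qed.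

Lemma eq_shift (x y z : vec) : (x + z == y + z) = (x == y).
Proof. by apply/eqP/eqP => [/addIr|->]. Qed.

Lemma hasRank_shift v s t i : hasRank (v + sh s t) i = hasRank v i.
Proof.
rewrite /hasRank pow_shift eq_shift; congr [&& _, _ & _].
by apply: eq_forallb => m; rewrite pow_shift eq_shift.
Qed.

Lemma hvec_shift v s t i : hvec (v + sh s t) i = hvec v i + sh s t *+ i.
Proof.
rewrite /hvec (eq_bigr (fun j => Phi ^+ j *m v + sh s t)); last by move=> j _; rewrite pow_shift.
by rewrite big_split /= sumr_const_nat subn1.
Qed.

Lemma hvec0 i : hvec 0 i = 0.
Proof. by rewrite /hvec big1 // => j _; rewrite mulmx0. Qed.

Lemma hvec_fixed d i : hasRank d i -> Pm *m hvec d i = hvec d i.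
Proof.
case/and3P=> hi /eqP hd _; move: hd; rewrite /hvec Phi_eq mulmx_sumr.
case: i hi => // i _ hd.
rewrite (eq_bigr (fun j => Pm ^+ j.+1 *m d)); last first.
  by move=> j _; rewrite mulmxA mulmxE -exprS.
rewrite big_nat_recr //= [in RHS]big_nat_recl //=.
by rewrite exprS -mulmxE -mulmxA hd addrC.
Qed.

Lemma PpowL d j : ringel (Pm ^+ j *m d) hinf = ringel d hinf.
Proof.
elim: j => [|j IH]; first by rewrite expr0 mul1mx.
by rewrite exprS -mulmxE -mulmxA PinvL.
Qed.
Lemma PpowR d j : ringel h0 (Pm ^+ j *m d) = ringel h0 d.
Proof.
elim: j => [|j IH]; first by rewrite expr0 mul1mx.
by rewrite exprS -mulmxE -mulmxA PinvR.
Qed.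

Lemma hvec_inf d i : ringel (hvec d i) hinf = ringel d hinf *+ i.
Proof.
rewrite /hvec (big_morph (ringel^~ hinf) (ringelDl hinf) (ringel0l hinf)).
rewrite (eq_bigr (fun _ => ringel d hinf)); last by move=> j _; rewrite Phi_eq PpowL.
by rewrite sumr_const_nat subn1.
Qed.
Lemma hvec_0 d i : ringel h0 (hvec d i) = ringel h0 d *+ i.
Proof.
rewrite /hvec (big_morph (ringel h0) (ringelDr h0) (ringel0r h0)).
rewrite (eq_bigr (fun _ => ringel h0 d)); last by move=> j _; rewrite Phi_eq PpowR.
by rewrite sumr_const_nat subn1.
Qed.

Lemma rank_data d i : hasRank d i ->
  exists al be : int, [/\ hvec d i = al *: h0 + be *: hinf,
     ringel d hinf *+ i = 6 * al & ringel h0 d *+ i = 6 * be].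
Proof.
move=> hr; have hf := fixed_span _ (hvec_fixed _ _ hr).
move: hf; move: (at_v (hvec d i) 0) (at_v (hvec d i) 3) => al be hf.
have [h1 h2] := ringel_span al be.
by exists al, be; split => //; rewrite -?hvec_inf -?hvec_0 hf.
Qed.


Lemma span_eqs d i (al be : int) : hvec d i = al *: h0 + be *: hinf ->
  ringel d hinf *+ i = 6 * al /\ ringel h0 d *+ i = 6 * be.
Proof.
move=> hv; have [h1 h2] := ringel_span al be.
by rewrite -hvec_inf -hvec_0 hv.
Qed.

Lemma num_lem (y x al be : int) (i:nat) : (0 < i)%N -> y * i%:Z = 6 * al -> x * i%:Z = 6 * be ->
 ((0 < y) = (0 < al)) * ((y == 0) = (al == 0)) * ((0 < x) = (0 < be)) * (x * al = be * y).
Proof. move=> hi h1 h2. 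
have e1 : (0 < y) = (0 < al) by apply/idP/idP => h; nia.
have e2 : (y == 0) = (al == 0) by apply/eqP/eqP => h; nia.
have e3 : (0 < x) = (0 < be) by apply/idP/idP => h; nia.
split => //.
have H : x * al * (6 * i%:Z) = be * y * (6 * i%:Z).
  have -> : x * al * (6 * i%:Z) = (x * i%:Z) * (6 * al) by ring.
  have -> : be * y * (6 * i%:Z) = (y * i%:Z) * (6 * be) by ring.
  rewrite h1 h2; ring.
apply: (mulIf _ H); lia.
Qed.

Lemma pos_slope d i al be : (0 < i)%N -> ringel d hinf *+ i = 6 * al -> ringel h0 d *+ i = 6 * be ->
  [/\ isPos d = (0 < al) || ((al == 0) && (0 < be)),
      (ringel d hinf == 0) = (al == 0) &
      (al != 0 -> slope d = Some (be%:~R / al%:~R))].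
Proof.
move=> hi; rewrite -[ringel d hinf *+ i]mulr_natr -[ringel h0 d *+ i]mulr_natr !natz => h1 h2.
have [[[e1 e2] e3] e4] := num_lem _ _ _ _ _ hi h1 h2.
rewrite /isPos /slope e1 e2 e3; split => // hal; rewrite (negbTE hal); congr Some.
have hy : (ringel d hinf)%:~R != 0 :> rat by rewrite intr_eq0 e2.
have ha : al%:~R != 0 :> rat by rewrite intr_eq0.
apply/eqP; rewrite eqr_div //.
by rewrite -!intrM eqr_int e4.
Qed.
Lemma NT (al be b : int) (a l : nat) : (0 < l)%N -> 0 < al -> (0 < a)%N ->
  gcdn (absz al) (absz be) = l -> gcdn a (absz b) = l -> al * b = be * a%:Z -> al = a%:Z /\ be = b.
Proof.
move=> hl hal ha g1 g2 e.
have eA : al = (absz al)%:Z by rewrite gtz0_abs.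
move: (absz al) eA g1 => A eA g1; subst al.
have e' : (A * absz b = absz be * a)%N by move/(congr1 absz): e; rewrite !abszM.
have : (A * l = a * l)%N.
  by rewrite -{1}g2 -g1 !muln_gcdr e' mulnC [(absz be * a)%N]mulnC.
move/eqP; rewrite eqn_pmul2r // => /eqP hA; subst A.
split => //; apply: (mulfI (x := a%:Z)); first by lia.
by rewrite e mulrC.
Qed.

Lemma charac lam l i a (b : int) d : (0 < i)%N -> (0 < l)%N -> gcdn a (absz b) = l ->
  match lam with
  | None => a = 0%N /\ b = l%:Z
  | Some x => (0 < a)%N /\ x = b%:~R / a%:R
  end ->
  Rli lam l i d <-> [/\ isRoot d, hasRank d i & hvec d i = a%:Z *: h0 + b *: hinf].
Proof.
move=> hi hl hg hlam; split.
  case/and3P => /and3P[hroot hpos /eqP hsl] hrk /eqP hql.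
  have [al [be [hv h1 h2]]] := rank_data _ _ hrk.
  have [hP hY hS] := pos_slope _ _ _ _ hi h1 h2.
  rewrite (ql_span _ _ _ _ hv) in hql.
  rewrite hP in hpos.
  suff [e1 e2] : al = a /\ be = b by rewrite hroot hrk hv e1 e2.
  case: lam hlam hsl => [x [ha hx]|[ha hb]] hsl.
    have hal : al != 0.
      apply/negP => /eqP hal; move: hsl; rewrite /slope hY hal eqxx //.
    move: hsl; rewrite (hS hal) hx => -[] /eqP.
    have hal' : 0 < al by move: hpos; rewrite (negbTE hal) /= orbF.
    have -> : (a%:R : rat) = (a%:Z)%:~R by [].
    rewrite eqr_div ?intr_eq0 //; last by lia.
    rewrite -!intrM eqr_int => /eqP e.
    apply: NT hl hal' ha hql hg _.
    by rewrite mulrC -e mulrC.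
  have hal : al = 0.
    apply/eqP; rewrite -hY; case hn: (ringel d hinf == 0) => //; move: hsl; rewrite /slope hn //.
  move: hpos hql; rewrite hal ha hb /= gcd0n => hbe hql; split => //.
  by rewrite -hql gtz0_abs.
case=> hroot hrk hv.
have [h1 h2] := span_eqs _ _ _ _ hv.
have [hP hY hS] := pos_slope _ _ _ _ hi h1 h2.
rewrite /Rli /Rlam hroot hrk (ql_span _ _ _ _ hv) hP /= hg eqxx ?andbT.
case: lam hlam => [x [ha hx]|[ha hb]].
  have ha0 : a%:Z != 0 by lia.
  rewrite (hS ha0) hx; apply/andP; split; first by lia.
  exact/eqP.
rewrite /slope hY ha hb eqxx /=.
apply/andP; split; [lia | exact: eqxx].
Qed.




Lemma atMn (x : vec) n k : at_v (x *+ n) k = at_v x k * n%:Z.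
Proof.
have -> : at_v (x *+ n) k = at_v x k *+ n.
  elim: n => [|n IH]; by rewrite ?mulr0n ?at0 // !mulrS atD IH.
by rewrite -mulr_natr natz.
Qed.

Lemma sh_add s t s' t' : sh s t + sh s' t' = sh (s + s') (t + t').
Proof. apply: vec_ext => k hk; rewrite /sh; expand; ring. Qed.
Lemma sh_opp s t : - sh s t = sh (- s) (- t).
Proof. apply: vec_ext => k hk; rewrite /sh; expand; ring. Qed.
Lemma sh_mulrn s t n : sh s t *+ n = sh (s * n%:Z) (t * n%:Z).
Proof. apply: vec_ext => k hk; rewrite /sh atMn; expand; ring. Qed.
Lemma sh_eq0 s t : sh s t = 0 -> s = 0 /\ t = 0.
Proof.
move=> H; have := congr1 (fun v => at_v v 0) H; have := congr1 (fun v => at_v v 3) H.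
rewrite /sh /=; expand; lia.
Qed.

Lemma shE s t : s *: h0 + t *: hinf = sh s t.
Proof. by []. Qed.

Theorem mainTheorem16 (lam : option rat) (i l : nat) (a : nat) (b : int) :
  i \in [:: 2%N; 3%N; 6%N] -> (0 < l)%N -> ~~ (i %| l)%N ->
  gcdn a `|b|%N = l ->
  match lam with
  | None => a = 0%N /\ b = l%:Z
  | Some x => (0 < a)%N /\ x = b%:~R / a%:R
  end ->
  forall d : vec,
    Rli lam l i d <->
    exists r : vec,
      Rmn (a %% i)%N `|(b %% i)%Z|%N i r /\
      d = (a %/ i)%N%:Z *: h0 + (b %/ i)%Z *: hinf + r.
Proof.
move=> hi3 hl hnd hg hlam d.
have hi : (0 < i)%N by move: hi3; rewrite !inE => /or3P [] /eqP ->.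
have ea : a = ((a %/ i) * i + a %% i)%N := divn_eq a i.
have eb : b = (b %/ i)%Z * i%:Z + (b %% i)%Z := divz_eq b i.
have b2ge : 0 <= (b %% i)%Z by apply: modz_ge0; lia.
have hb2 : (absz (b %% i)%Z)%:Z = (b %% i)%Z := gez0_abs b2ge.
move: ea eb b2ge hb2.
move: (a %/ i)%N (a %% i)%N (b %/ i)%Z (b %% i)%Z => a1 a2 b1 b2 ea eb b2ge hb2.
have nz : ~~ ((a2 == 0%N) && (b2 == 0)).
  apply/negP => /andP[/eqP h1 /eqP h2]; move: hnd; rewrite -hg dvdn_gcd; apply/negP/negPn/andP; split.
    by apply/dvdnP; exists a1; rewrite ea h1 addn0.
  by apply/dvdnP; exists (absz b1); rewrite eb h2 addr0 abszM.
have hl2 : (0 < gcdn a2 (absz b2))%N by rewrite gcdn_gt0; lia.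
have C2 : forall r, Rli (if a2 == 0%N then None else Some ((absz b2)%:Q / a2%:Q)) (gcdn a2 (absz b2)) i r <->
    [/\ isRoot r, hasRank r i & hvec r i = a2%:Z *: h0 + (absz b2)%:Z *: hinf].
  move=> r; apply: charac => //.
  case: eqP => [->|h]; first by split => //; rewrite gcd0n.
  by split => //; lia.
rewrite (charac _ _ _ _ _ d hi hl hg hlam) /Rmn.
split.
  case=> hroot hrk hv.
  have er : d - sh a1%:Z b1 = d + sh (- a1%:Z) (- b1) by rewrite sh_opp.
  have hv2 : hvec (d + sh (- a1%:Z) (- b1)) i = sh a2 (absz b2).
    rewrite hvec_shift hv shE sh_mulrn sh_add hb2; congr sh; nia.
  exists (d - sh a1%:Z b1); split; last by rewrite shE addrC subrK.
  apply/C2.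
  rewrite er hasRank_shift hv2; split => //.
  rewrite /isRoot qform_shift; case/andP: hroot => _ ->; rewrite andbT.
  apply/eqP => h0'; move: hv2; rewrite h0' hvec0 => /esym /sh_eq0 [h1 h2].
  have e1 : a2 = 0%N by lia.
  by move: nz; rewrite e1 -hb2 h2.
case=> r [hr ->].
have [rroot rrk rhv] := (C2 r).1 hr.
have hv : hvec (r + sh a1%:Z b1) i = sh a b.
  rewrite hvec_shift rhv shE sh_mulrn sh_add hb2; congr sh; nia.
rewrite shE addrC hasRank_shift hv; split => //.
rewrite /isRoot qform_shift; case/andP: rroot => _ ->; rewrite andbT.
apply/eqP => h0'; move: hv; rewrite h0' hvec0 => /esym /sh_eq0 [h1 h2].
have ea0 : a = 0%N by lia.
by move: hl; rewrite -hg ea0 h2.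
Qed.
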